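(* Let $T$ be a $\delta$-Jordan Lie supertriple system and $N:T\to T$ a Nijenhuis operator for $T$. Define $$\psi(x_1,x_2,x_3)=(-1)^{|x_1|(|x_2|+|x_3|)}\theta(x_2,x_3)Nx_1-\delta(-1)^{|x_2||x_3|}\theta(x_1,x_3)Nx_2+\delta D(x_1,x_2)Nx_3-N[x_1,x_2,x_3].$$ Then $[x_1,x_2,x_3]_\lambda=[x_1,x_2,x_3]+\lambda\psi(x_1,x_2,x_3)$ ($\lambda$ a formal variable) defines a deformation of $T$, i.e. $T$ with $[\cdot,\cdot,\cdot]_\lambda$ is a $\delta$-Jordan Lie supertriple system, and this deformation is trivial.
   Context: A $\delta$-Jordan Lie supertriple system ($\delta\in\{1,-1\}$) is a $\mathbb{Z}_2$-graded vector space $T$ with a trilinear product $[\cdot,\cdot,\cdot]$ such that, for all homogeneous $a,b,c,d,e$ (with $|a|$ the degree of $a$): $|[a,b,c]|=|a|+|b|+|c|$; $[b,a,c]=-\delta(-1)^{|a||b|}[a,b,c]$; $(-1)^{|a||c|}[a,b,c]+(-1)^{|b||a|}[b,c,a]+(-1)^{|c||b|}[c,a,b]=0$; and $[a,b,[c,d,e]]=[[a,b,c],d,e]+(-1)^{|c|(|a|+|b|)}[c,[a,b,d],e]+\delta(-1)^{(|a|+|b|)(|c|+|d|)}[c,d,[a,b,e]]$. Here $\theta(a,b)(x)=(-1)^{|x|(|a|+|b|)}[x,a,b]$ and $D(a,b)(x)=\delta[a,b,x]$ (the adjoint representation). A linear operator $N:T\to T$ is a Nijenhuis operator if for all $x_1,x_2,x_3\in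 T$: $[Nx_1,Nx_2,Nx_3]=0$ and $N^2[x_1,x_2,x_3]=N[Nx_1,x_2,x_3]+N[x_1,Nx_2,x_3]+N[x_1,x_2,Nx_3]-[Nx_1,Nx_2,x_3]-[x_1,Nx_2,Nx_3]-[Nx_1,x_2,Nx_3]$. A deformation $[\cdot,\cdot,\cdot]_\lambda$ is trivial if there is a linear map $N':T\to T$ such that for all $\lambda$, $\varphi_\lambda=id+\lambda N'$ satisfies $\varphi_\lambda[x_1,x_2,x_3]_\lambda=[\varphi_\lambda x_1,\varphi_\lambda x_2,\varphi_\lambda x_3]$ for all $x_1,x_2,x_3\in T$. *)

(* Defs.v *)
From HB Require Import structures.
From mathcomp Require Import all_boot all_order all_algebra.
Set Implicit Arguments. Unset Strict Implicit. Unset Printing Implicit Defensive.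
Import Order.TTheory GRing.Theory Num.Theory.
Local Open Scope ring_scope.

(* A Z_2-graded vector space T = T_0 (+) T_1 over a field K is modelled as the
   product V0 * V1 of two K-vector spaces. Degrees are booleans (false = 0,
   true = 1), addition of degrees is xor (+). *)

Section SuperTriple.
Variables (K : fieldType) (V0 V1 : lmodType K).
Local Notation T := (V0 * V1)%type.

Definition homog (d : bool) (x : T) : Prop :=
  if d then x.1 = 0 else x.2 = 0.

Definition proj (d : bool) (x : T) : T :=
  if d then (0, x.2) else (x.1, 0).

Definition sgn (b : bool) : K := if b then -1 else 1.

Definition trilinear (br : T -> T -> T -> T) : Prop :=
  [/\ forall (a : K) x x' y z, br (a *: x + x') y z = a *: br x y z + br x' y z,
      forall (a : K) x y y' z, br x (a *: y + y') z = a *: br x y z + br x y' z &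
      forall (a : K) x y z z', br x y (a *: z + z') = a *: br x y z + br x y z'].

Definition JLSTS (delta : K) (br : T -> T -> T -> T) : Prop :=
  [/\ trilinear br,
      (forall a b c da db dc, homog da a -> homog db b -> homog dc c ->
         homog (da (+) db (+) dc) (br a b c)),
      (forall a b c da db, homog da a -> homog db b ->
         br b a c = (- delta * sgn (da && db)) *: br a b c),
      (forall a b c da db dc, homog da a -> homog db b -> homog dc c ->
         sgn (da && dc) *: br a b c + sgn (db && da) *: br b c a
         + sgn (dc && db) *: br c a b = 0) &
      (forall a b c d e da db dc dd, homog da a -> homog db b -> homog dc c ->
         homog dd d ->
         br a b (br c d e) = br (br a b c) d e
           + sgn (dc && (da (+) db)) *: br c (br a b d) e
           + (delta * sgn ((da (+) db) && (dc (+) dd))) *: br c d (br a b e))].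

(* theta(a,b)(x) = (-1)^{|x|(|a|+|b|)} [x,a,b], where dx, da, db are the degrees *)
Definition theta (br : T -> T -> T -> T) (dx da db : bool) (a b x : T) : T :=
  sgn (dx && (da (+) db)) *: br x a b.

Definition Dop (delta : K) (br : T -> T -> T -> T) (a b x : T) : T :=
  delta *: br a b x.

Definition even_op (N : T -> T) : Prop :=
  forall d x, homog d x -> homog d (N x).

Definition Nijenhuis (br : T -> T -> T -> T) (N : T -> T) : Prop :=
  forall x1 x2 x3,
    br (N x1) (N x2) (N x3) = 0 /\
    N (N (br x1 x2 x3)) =
      N (br (N x1) x2 x3) + N (br x1 (N x2) x3) + N (br x1 x2 (N x3))
      - br (N x1) (N x2) x3 - br x1 (N x2) (N x3) - br (N x1) x2 (N x3).

(* psi on homogeneous x1, x2, x3 of degrees d1, d2, d3 (N even, so |N xi| = di) *)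
Definition psi_h (delta : K) (br : T -> T -> T -> T) (N : T -> T)
    (d1 d2 d3 : bool) (x1 x2 x3 : T) : T :=
  sgn (d1 && (d2 (+) d3)) *: theta br d1 d2 d3 x2 x3 (N x1)
  - (delta * sgn (d2 && d3)) *: theta br d2 d1 d3 x1 x3 (N x2)
  + delta *: Dop delta br x1 x2 (N x3)
  - N (br x1 x2 x3).

(* psi extended trilinearly to all of T *)
Definition psi (delta : K) (br : T -> T -> T -> T) (N : T -> T) (x1 x2 x3 : T) : T :=
  \sum_(d1 : bool) \sum_(d2 : bool) \sum_(d3 : bool)
     psi_h delta br N d1 d2 d3 (proj d1 x1) (proj d2 x2) (proj d3 x3).

Definition def_br (delta : K) (br : T -> T -> T -> T) (N : T -> T) (lambda : K)
    (x1 x2 x3 : T) : T :=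
  br x1 x2 x3 + lambda *: psi delta br N x1 x2 x3.

Definition trivial_deformation (br : T -> T -> T -> T) (br_l : K -> T -> T -> T -> T)
    : Prop :=
  exists N' : {linear T -> T}, forall (lambda : K) x1 x2 x3,
    let phi := fun x => x + lambda *: N' x in
    phi (br_l lambda x1 x2 x3) = br (phi x1) (phi x2) (phi x3).

End SuperTriple.

(* Main.v *)
Require Import Defs.
From HB Require Import structures.
From mathcomp Require Import all_boot all_order all_algebra.
From mathcomp Require Import ring.
Import GRing.Theory.
Local Open Scope ring_scope.

Lemma bring_step (V : zmodType) (y q r r' : V) : r = q + r' -> y + r = q + (y + r').
Proof. by move=> ->; rewrite addrCA. Qed.
Lemma bring_base (V : zmodType) (q : V) : q = q + 0.
Proof. by rewrite addr0. Qed.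
Lemma cancel_bring (V : zmodType) (h q r r' : V) :
  r = q + r' -> h + q = 0 -> r' = 0 -> h + r = 0.
Proof. by move=> -> hq ->; rewrite addr0. Qed.

Ltac solve_bring :=
  first [ reflexivity | apply: bring_step; solve_bring | apply: bring_base ].

Ltac cancel0 :=
  lazymatch goal with
  | |- 0 = 0 => reflexivity
  | |- ?h + ?r = 0 =>
     let q := lazymatch h with - ?x => x | _ => constr:(- h) end in
     apply: (@cancel_bring _ h q r); [solve_bring | by rewrite ?addrN ?addNr | cancel0]
  | |- ?h = 0 => fail 100 "leftover" h
  end.

Ltac acfin := apply/subr0_eq; rewrite ?opprD ?opprK ?oppr0 ?addr0 ?add0r -?addrA; cancel0.


Section Main.
Variables (K : fieldType) (V0 V1 : lmodType K).
Local Notation T := (V0 * V1)%type.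
Variables (br : T -> T -> T -> T) (delta : K).
Hypothesis hdelta : delta = 1 \/ delta = -1.
Hypothesis hT : JLSTS delta br.
Variable N : {linear T -> T}.
Hypothesis hNeven : even_op N.
Hypothesis hN : Nijenhuis br N.

Let tl : trilinear br. Proof. by case: hT. Qed.
Let hgr := let: And5 _ h _ _ _ := hT in h.
Let hsk := let: And5 _ _ h _ _ := hT in h.
Let hcyc := let: And5 _ _ _ h _ := hT in h.
Let hfi := let: And5 _ _ _ _ h := hT in h.

Lemma hNe {d} {x : T} : homog d x -> homog d (N x).
Proof. exact: hNeven. Qed.
Lemma gr {a b c : T} {da db dc} : homog da a -> homog db b -> homog dc c ->
  homog (da (+) db (+) dc) (br a b c).
Proof. exact: hgr. Qed.
Lemma sk {a b : T} (c : T) {da db} : homog da a -> homog db b ->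
  br b a c = (- delta * sgn K (da && db)) *: br a b c.
Proof. exact: hsk. Qed.
Lemma cyc {a b c : T} {da db dc} : homog da a -> homog db b -> homog dc c ->
  sgn K (da && dc) *: br a b c + sgn K (db && da) *: br b c a
  + sgn K (dc && db) *: br c a b = 0.
Proof. exact: hcyc. Qed.
Lemma fi {a b c d : T} (e : T) {da db dc dd} : homog da a -> homog db b -> homog dc c ->
  homog dd d ->
  br a b (br c d e) = br (br a b c) d e
    + sgn K (dc && (da (+) db)) *: br c (br a b d) e
    + (delta * sgn K ((da (+) db) && (dc (+) dd))) *: br c d (br a b e).
Proof. exact: hfi. Qed.

Lemma zero_of (V : zmodType) (u : V) : u = u + u -> u = 0.
Proof. by move=> h; move: (congr1 (fun t => t - u) h) => /=; rewrite subrr addrK. Qed.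

Lemma br10 y z : br 0 y z = 0.
Proof. case: tl => h _ _; apply: zero_of; have H := h 1 0 0 y z; rewrite !scale1r addr0 in H; exact H. Qed.
Lemma br20 x z : br x 0 z = 0.
Proof. case: tl => _ h _; apply: zero_of; have H := h 1 x 0 0 z; rewrite !scale1r addr0 in H; exact H. Qed.
Lemma br30 x y : br x y 0 = 0.
Proof. case: tl => _ _ h; apply: zero_of; have H := h 1 x y 0 0; rewrite !scale1r addr0 in H; exact H. Qed.

Lemma br1D x x' y z : br (x + x') y z = br x y z + br x' y z.
Proof. case: tl => h _ _; have H := h 1 x x' y z; rewrite !scale1r in H; exact H. Qed.
Lemma br2D x y y' z : br x (y + y') z = br x y z + br x y' z.
Proof. case: tl => _ h _; have H := h 1 x y y' z; rewrite !scale1r in H; exact H. Qed.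
Lemma br3D x y z z' : br x y (z + z') = br x y z + br x y z'.
Proof. case: tl => _ _ h; have H := h 1 x y z z'; rewrite !scale1r in H; exact H. Qed.
Lemma br1Z a x y z : br (a *: x) y z = a *: br x y z.
Proof. case: tl => h _ _; have H := h a x 0 y z; rewrite !addr0 br10 addr0 in H; exact H. Qed.
Lemma br2Z a x y z : br x (a *: y) z = a *: br x y z.
Proof. case: tl => _ h _; have H := h a x y 0 z; rewrite !addr0 br20 addr0 in H; exact H. Qed.
Lemma br3Z a x y z : br x y (a *: z) = a *: br x y z.
Proof. case: tl => _ _ h; have H := h a x y z 0; rewrite !addr0 br30 addr0 in H; exact H. Qed.
Lemma br1N x y z : br (- x) y z = - br x y z.
Proof. by rewrite -scaleN1r br1Z scaleN1r. Qed.
Lemma br2N x y z : br x (- y) z = - br x y z.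
Proof. by rewrite -scaleN1r br2Z scaleN1r. Qed.
Lemma br3N x y z : br x y (- z) = - br x y z.
Proof. by rewrite -scaleN1r br3Z scaleN1r. Qed.

Lemma ND (x y : T) : N (x + y) = N x + N y. Proof. exact: linearD. Qed.
Lemma NN (x : T) : N (- x) = - N x. Proof. exact: raddfN. Qed.
Lemma NZ a (x : T) : N (a *: x) = a *: N x. Proof. exact: linearZ. Qed.
Lemma N0 : N 0 = 0. Proof. exact: raddf0. Qed.

Ltac expand := rewrite ?(br1D, br2D, br3D, br1Z, br2Z, br3Z, br1N, br2N, br3N,
   ND, NZ, NN, N0, br10, br20, br30, scaler0, addr0, add0r, oppr0, scalerDr, scalerN, opprD, opprK).

Lemma homogD d (x y : T) : homog d x -> homog d y -> homog d (x + y).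
Proof. by case: d; rewrite /homog /= => -> ->; rewrite addr0. Qed.
Lemma homogZ d a (x : T) : homog d x -> homog d (a *: x).
Proof. by case: d; rewrite /homog /= => ->; rewrite scaler0. Qed.
Lemma homogN d (x : T) : homog d x -> homog d (- x).
Proof. by case: d; rewrite /homog /= => ->; rewrite oppr0. Qed.
Lemma homog_proj d (x : T) : homog d (proj d x).
Proof. by case: d. Qed.
Lemma proj_sum (x : T) : proj true x + proj false x = x.
Proof. by case: x => x1 x2; rewrite /proj /=; congr pair; rewrite ?add0r ?addr0. Qed.

Definition Bf x y z := br (N x) y z + br x (N y) z + br x y (N z) - N (br x y z).

Lemma BfL1 a x x' y z : Bf (a *: x + x') y z = a *: Bf x y z + Bf x' y z.
Proof. rewrite /Bf; expand; acfin. Qed.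
Lemma BfL2 a x y y' z : Bf x (a *: y + y') z = a *: Bf x y z + Bf x y' z.
Proof. rewrite /Bf; expand; acfin. Qed.
Lemma BfL3 a x y z z' : Bf x y (a *: z + z') = a *: Bf x y z + Bf x y z'.
Proof. rewrite /Bf; expand; acfin. Qed.


Lemma BfD1 x x' y z : Bf (x + x') y z = Bf x y z + Bf x' y z.
Proof. have H := BfL1 1 x x' y z; rewrite !scale1r in H; exact H. Qed.
Lemma BfD2 x y y' z : Bf x (y + y') z = Bf x y z + Bf x y' z.
Proof. have H := BfL2 1 x y y' z; rewrite !scale1r in H; exact H. Qed.
Lemma BfD3 x y z z' : Bf x y (z + z') = Bf x y z + Bf x y z'.
Proof. have H := BfL3 1 x y z z'; rewrite !scale1r in H; exact H. Qed.

Lemma psi_hE d1 d2 d3 x y z : homog d1 x -> homog d2 y -> homog d3 z ->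
  psi_h delta br N d1 d2 d3 x y z = Bf x y z.
Proof.
move=> hx hy hz; rewrite /psi_h /theta /Dop (sk z hx (hNe hy)).
have e1 : forall b (v : T), sgn K b *: (sgn K b *: v) = v.
  by move=> b v; rewrite scalerA; case: b; rewrite /sgn ?mulrNN mulr1 scale1r.
have e2 : forall v : T, (delta * sgn K (d2 && d3)) *: (sgn K (d2 && (d1 (+) d3)) *:
    ((- delta * sgn K (d1 && d2)) *: v)) = - v.
  move=> v; rewrite !scalerA -scaleN1r; congr (_ *: _).
  by case: hdelta => ->; case: d1 hx; case: d2 hy; case: d3 hz; rewrite /sgn /= => *; ring.
have e3 : forall v : T, delta *: (delta *: v) = v.
  by move=> v; rewrite scalerA; case: hdelta => ->; rewrite ?mulrNN mulr1 scale1r.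
by rewrite e1 e2 e3 opprK /Bf.
Qed.

Lemma psiE x y z : psi delta br N x y z = Bf x y z.
Proof.
rewrite /psi !big_bool /= !psi_hE; try exact: homog_proj.
by rewrite -!BfD3 !proj_sum -!BfD2 !proj_sum -!BfD1 proj_sum.
Qed.

Local Notation P := (psi delta br N).

Lemma C2 x y z : N (P x y z) = br (N x) (N y) z + br (N x) y (N z) + br x (N y) (N z).
Proof. rewrite psiE /Bf; expand; rewrite (proj2 (hN x y z)); expand; acfin. Qed.

Lemma P1D x x' y z : P (x + x') y z = P x y z + P x' y z.
Proof. by rewrite !psiE BfD1. Qed.
Lemma P2D x y y' z : P x (y + y') z = P x y z + P x y' z.
Proof. by rewrite !psiE BfD2. Qed.
Lemma P3D x y z z' : P x y (z + z') = P x y z + P x y z'.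
Proof. by rewrite !psiE BfD3. Qed.
Lemma P1Z a x y z : P (a *: x) y z = a *: P x y z.
Proof. rewrite !psiE /Bf; expand; acfin. Qed.
Lemma P2Z a x y z : P x (a *: y) z = a *: P x y z.
Proof. rewrite !psiE /Bf; expand; acfin. Qed.
Lemma P3Z a x y z : P x y (a *: z) = a *: P x y z.
Proof. rewrite !psiE /Bf; expand; acfin. Qed.

Lemma scalerC2 a b (v : T) : a *: (b *: v) = b *: (a *: v).
Proof. by rewrite !scalerA mulrC. Qed.

Lemma triv_eq l x y z :
  def_br delta br N l x y z + l *: N (def_br delta br N l x y z)
  = br (x + l *: N x) (y + l *: N y) (z + l *: N z).
Proof.
rewrite /def_br ND NZ C2 psiE /Bf; expand.
rewrite (proj1 (hN x y z)); expand; acfin.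
Qed.

Lemma P_homog a b c da db dc : homog da a -> homog db b -> homog dc c ->
  homog (da (+) db (+) dc) (P a b c).
Proof.
move=> ha hb hc; rewrite psiE /Bf.
apply: homogD; first apply: homogD; first apply: homogD.
- exact: gr (hNe ha) hb hc.
- exact: gr ha (hNe hb) hc.
- exact: gr ha hb (hNe hc).
- exact/homogN/hNe/gr.
Qed.

Lemma P_skew a b c da db : homog da a -> homog db b ->
  P b a c = (- delta * sgn K (da && db)) *: P a b c.
Proof.
move=> ha hb; rewrite !psiE /Bf.
rewrite (sk c ha (hNe hb)) (sk c (hNe ha) hb).
rewrite (sk (N c) ha hb) (sk c ha hb); expand; acfin.
Qed.

Lemma P_cyc a b c da db dc : homog da a -> homog db b -> homog dc c ->
  sgn K (da && dc) *: P a b c + sgn K (db && da) *: P b c a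
  + sgn K (dc && db) *: P c a b = 0.
Proof.
move=> ha hb hc; rewrite !psiE /Bf.
have h1 := cyc (hNe ha) hb hc.
have h2 := cyc ha (hNe hb) hc.
have h3 := cyc ha hb (hNe hc).
have h0 := cyc ha hb hc.
transitivity ((sgn K (da && dc) *: br (N a) b c + sgn K (db && da) *: br b c (N a)
       + sgn K (dc && db) *: br c (N a) b)
     + (sgn K (da && dc) *: br a (N b) c + sgn K (db && da) *: br (N b) c a
       + sgn K (dc && db) *: br c a (N b))
     + (sgn K (da && dc) *: br a b (N c) + sgn K (db && da) *: br b (N c) a
       + sgn K (dc && db) *: br (N c) a b)
     - N (sgn K (da && dc) *: br a b c + sgn K (db && da) *: br b c a
       + sgn K (dc && db) *: br c a b)).
  expand; acfin.
by rewrite h1 h2 h3 h0 N0 !addr0 subr0.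
Qed.


Lemma n3c1 a b c d e :
  P a b (br c d e) + br a b (P c d e) + N (br a b (br c d e)) =
  br (N a) b (br c d e) + br a (N b) (br c d e) + br a b (br (N c) d e)
  + br a b (br c (N d) e) + br a b (br c d (N e)).
Proof. rewrite !psiE /Bf; expand; acfin. Qed.
Lemma n1c1 a b c d e :
  P (br a b c) d e + br (P a b c) d e + N (br (br a b c) d e) =
  br (br (N a) b c) d e + br (br a (N b) c) d e + br (br a b (N c)) d e
  + br (br a b c) (N d) e + br (br a b c) d (N e).
Proof. rewrite !psiE /Bf; expand; acfin. Qed.
Lemma n2c1 a b c d e :
  P a (br b c d) e + br a (P b c d) e + N (br a (br b c d) e) =
  br (N a) (br b c d) e + br a (br (N b) c d) e + br a (br b (N c) d) e
  + br a (br b c (N d)) e + br a (br b c d) (N e).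
Proof. rewrite !psiE /Bf; expand; acfin. Qed.

Lemma n3c2 a b c d e :
  P a b (P c d e) + N (P a b (br c d e) + br a b (P c d e)) =
  br (N a) (N b) (br c d e) + br (N a) b (br (N c) d e) + br (N a) b (br c (N d) e)
  + br (N a) b (br c d (N e)) + br a (N b) (br (N c) d e) + br a (N b) (br c (N d) e)
  + br a (N b) (br c d (N e)) + br a b (br (N c) (N d) e) + br a b (br (N c) d (N e))
  + br a b (br c (N d) (N e)).
Proof.
rewrite ND C2 !psiE /Bf; expand; rewrite (proj2 (hN c d e)); expand; acfin.
Qed.
Lemma n1c2 a b c d e :
  P (P a b c) d e + N (P (br a b c) d e + br (P a b c) d e) =
  br (br (N a) (N b) c) d e + br (br (N a) b (N c)) d e + br (br (N a) b c) (N d) e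
  + br (br (N a) b c) d (N e) + br (br a (N b) (N c)) d e + br (br a (N b) c) (N d) e
  + br (br a (N b) c) d (N e) + br (br a b (N c)) (N d) e + br (br a b (N c)) d (N e)
  + br (br a b c) (N d) (N e).
Proof.
rewrite ND C2 !psiE /Bf; expand; rewrite (proj2 (hN a b c)); expand; acfin.
Qed.
Lemma n2c2 a b c d e :
  P a (P b c d) e + N (P a (br b c d) e + br a (P b c d) e) =
  br (N a) (br (N b) c d) e + br (N a) (br b (N c) d) e + br (N a) (br b c (N d)) e
  + br (N a) (br b c d) (N e) + br a (br (N b) (N c) d) e + br a (br (N b) c (N d)) e
  + br a (br (N b) c d) (N e) + br a (br b (N c) (N d)) e + br a (br b (N c) d) (N e)
  + br a (br b c (N d)) (N e).
Proof.
rewrite ND C2 !psiE /Bf; expand; rewrite (proj2 (hN b c d)); expand; acfin.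
Qed.


Lemma rule3 {u v w S : T} : u + v + w = S -> u = S - v - w.
Proof. move=> <-; acfin. Qed.
Lemma rule2 {u v S : T} : u + v = S -> u = S - v.
Proof. move=> <-; acfin. Qed.

Lemma FI1 a b c d e da db dc dd : homog da a -> homog db b -> homog dc c -> homog dd d ->
  P a b (br c d e) + br a b (P c d e) =
  (P (br a b c) d e + br (P a b c) d e)
  + sgn K (dc && (da (+) db)) *: (P c (br a b d) e + br c (P a b d) e)
  + (delta * sgn K ((da (+) db) && (dc (+) dd))) *: (P c d (br a b e) + br c d (P a b e)).
Proof.
move=> ha hb hc hd.
rewrite (rule3 (n3c1 a b c d e)) (rule3 (n1c1 a b c d e)) (rule3 (n2c1 c a b d e)).
rewrite (rule3 (n3c1 c d a b e)).
rewrite (fi e ha hb hc hd) (fi e (hNe ha) hb hc hd) (fi e ha (hNe hb) hc hd).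
rewrite (fi e ha hb (hNe hc) hd) (fi e ha hb hc (hNe hd)) (fi (N e) ha hb hc hd).
expand; acfin.
Qed.

Arguments FI1 {a b c d} e {da db dc dd}.

Lemma FI2 a b c d e da db dc dd : homog da a -> homog db b -> homog dc c -> homog dd d ->
  P a b (P c d e) =
  P (P a b c) d e
  + sgn K (dc && (da (+) db)) *: P c (P a b d) e
  + (delta * sgn K ((da (+) db) && (dc (+) dd))) *: P c d (P a b e).
Proof.
move=> ha hb hc hd.
rewrite (rule2 (n3c2 a b c d e)) (rule2 (n1c2 a b c d e)) (rule2 (n2c2 c a b d e)).
rewrite (rule2 (n3c2 c d a b e)) (FI1 e ha hb hc hd).
rewrite (fi e (hNe ha) (hNe hb) hc hd) (fi e (hNe ha) hb (hNe hc) hd).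
rewrite (fi e (hNe ha) hb hc (hNe hd)) (fi (N e) (hNe ha) hb hc hd).
rewrite (fi e ha (hNe hb) (hNe hc) hd) (fi e ha (hNe hb) hc (hNe hd)).
rewrite (fi (N e) ha (hNe hb) hc hd) (fi e ha hb (hNe hc) (hNe hd)).
rewrite (fi (N e) ha hb (hNe hc) hd) (fi (N e) ha hb hc (hNe hd)).
expand; acfin.
Qed.

Arguments FI2 {a b c d} e {da db dc dd}.
Arguments P_skew {a b} c {da db}.
Arguments P_cyc {a b c da db dc}.

Lemma comb (l s t : K) (x0 x1 x2 y0 y1 y2 z0 z1 z2 : T) :
  x0 + s *: y0 + t *: z0 + l *: (x1 + s *: y1 + t *: z1)
  + l *: (l *: (x2 + s *: y2 + t *: z2)) =
  (x0 + l *: x1 + l *: (l *: x2)) + s *: (y0 + l *: y1 + l *: (l *: y2))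
  + t *: (z0 + l *: z1 + l *: (l *: z2)).
Proof. rewrite !scalerDr !(scalerC2 s l) !(scalerC2 t l); acfin. Qed.

Ltac expand2 := rewrite ?(P1D, P2D, P3D, P1Z, P2Z, P3Z); expand;
  rewrite ?(P1D, P2D, P3D, P1Z, P2Z, P3Z); expand.

Local Notation D l := (def_br delta br N l).

Lemma FIdef l a b c d e da db dc dd : homog da a -> homog db b -> homog dc c -> homog dd d ->
  D l a b (D l c d e) = D l (D l a b c) d e
    + sgn K (dc && (da (+) db)) *: D l c (D l a b d) e
    + (delta * sgn K ((da (+) db) && (dc (+) dd))) *: D l c d (D l a b e).
Proof.
move=> ha hb hc hd.
have eL : forall a b c d e, D l a b (D l c d e) = br a b (br c d e)
   + l *: (P a b (br c d e) + br a b (P c d e)) + l *: (l *: P a b (P c d e)).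
  by move=> *; rewrite /def_br; expand2; acfin.
have e1 : forall a b c d e, D l (D l a b c) d e = br (br a b c) d e
   + l *: (P (br a b c) d e + br (P a b c) d e) + l *: (l *: P (P a b c) d e).
  by move=> *; rewrite /def_br; expand2; acfin.
have e2 : forall a b c d e, D l a (D l b c d) e = br a (br b c d) e
   + l *: (P a (br b c d) e + br a (P b c d) e) + l *: (l *: P a (P b c d) e).
  by move=> *; rewrite /def_br; expand2; acfin.
rewrite !eL e1 e2 (fi e ha hb hc hd) (FI1 e ha hb hc hd) (FI2 e ha hb hc hd).
exact: comb.
Qed.

Lemma main_sec : (forall l : K, JLSTS delta (def_br delta br N l)) /\
  trivial_deformation br (def_br delta br N).
Proof.
split; last by exists N => l x y z /=; exact: triv_eq.
move=> l; split.
- split.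
  + move=> a x x' y z; rewrite /def_br; expand2; rewrite !(scalerC2 l a); acfin.
  + move=> a x y y' z; rewrite /def_br; expand2; rewrite !(scalerC2 l a); acfin.
  + move=> a x y z z'; rewrite /def_br; expand2; rewrite !(scalerC2 l a); acfin.
- move=> a b c da db dc ha hb hc; rewrite /def_br; apply: homogD; first exact: gr.
  by apply: homogZ; exact: P_homog.
- move=> a b c da db ha hb; rewrite /def_br (sk c ha hb) (P_skew c ha hb).
  by rewrite scalerDr (scalerC2 l).
- move=> a b c da db dc ha hb hc; rewrite /def_br.
  transitivity ((sgn K (da && dc) *: br a b c + sgn K (db && da) *: br b c a
    + sgn K (dc && db) *: br c a b) + l *: (sgn K (da && dc) *: P a b c
    + sgn K (db && da) *: P b c a + sgn K (dc && db) *: P c a b)).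
    rewrite !scalerDr !(scalerC2 _ l); acfin.
  by rewrite (cyc ha hb hc) (P_cyc ha hb hc) scaler0 addr0.
- move=> a b c d e da db dc dd ha hb hc hd; exact: FIdef.
Qed.

End Main.

Theorem theorem5p4 (K : fieldType) (V0 V1 : lmodType K)
    (br : (V0 * V1)%type -> (V0 * V1)%type -> (V0 * V1)%type -> (V0 * V1)%type)
    (delta : K) (hdelta : delta = 1 \/ delta = -1)
    (hT : JLSTS delta br)
    (N : {linear (V0 * V1)%type -> (V0 * V1)%type})
    (hNeven : even_op N) (hN : Nijenhuis br N) :
  (forall lambda : K, JLSTS delta (def_br delta br N lambda)) /\
  trivial_deformation br (def_br delta br N).
Proof. exact: main_sec. Qed.
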